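(* Let $q \ge 2$ be a fixed integer and let $\Sigma$ be an alphabet with $|\Sigma| = q$. There exist constants $c > 0$ and $n_0$ (which may depend on $q$) such that for every integer $n \ge n_0$, the number of privileged words of length $n$ over $\Sigma$ is at least \[ \frac{c\, q^n}{n (\log_q n)^2}. \]
   Context: A border of a word $w$ is a non-empty word that is both a prefix and a suffix of $w$. A word $w$ is privileged if either $|w| \le 1$, or $|w| \ge 2$ and $w$ has a border $u$ which is itself privileged and which occurs exactly twice as a factor (contiguous subword) of $w$ (i.e., only as the prefix and as the suffix, these being two distinct occurrences). The claim is meant for fixed $q$, with the constants allowed to depend on $q$. *)

(* Defs.v *)
From mathcomp Require Import all_boot.
From Stdlib Require Import Reals.
Set Implicit Arguments. Unset Strict Implicit. Unset Printing Implicit Defensive.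

Section Words.
Variable T : eqType.

Definition occurrences (u w : seq T) : nat :=
  count (fun i => take (size u) (drop i w) == u)
        (iota 0 (size w - size u).+1).

Definition is_border (u w : seq T) : bool :=
  [&& 0 < size u, prefix u w & suffix u w].

(* Privileged words, by recursion with fuel k (fuel size w suffices, since
   the border u witnessing privilegedness occurs exactly twice, hence u <> w,
   hence |u| < |w|). Borders of w are exactly the take i w, 1 <= i <= |w|,
   that are also suffixes. *)
Fixpoint privb (k : nat) (w : seq T) : bool :=
  if size w <= 1 then true else
  match k with
  | 0 => false
  | k'.+1 =>
      has (fun i => let u := take i w in
                    [&& is_border u w, privb k' u & occurrences u w == 2])
          (iota 1 (size w))
  end.

Definition privileged (w : seq T) : bool := privb (size w) w.

End Words.

Definition num_privileged (T : finType) (n : nat) : nat :=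
  #|[pred t : n.-tuple T | privileged (tval t)]|.

(* Main.v *)
Require Import Defs.
From mathcomp Require Import all_boot.
From Stdlib Require Import Reals.
From mathcomp Require Import all_boot zify.
Set Implicit Arguments. Unset Strict Implicit. Unset Printing Implicit Defensive.

Section W.
Variable T : eqType.
Implicit Types u w x y : seq T.

Lemma privb_mono k k' w : k <= k' -> privb k w -> privb k' w.
Proof.
elim: k k' w => [|k IH] [|k'] w //= hk.
- by case: ifP.
- case: ifP => // _; apply: sub_has => i /and3P [h1 h2 h3].
  by rewrite h1 h3 (IH k').
Qed.

Definition occ_at u w t := take (size u) (drop t w) == u.

Lemma occ_atP d u w t : 0 < size u -> reflect (t + size u <= size w /\
   forall j, j < size u -> nth d w (t+j) = nth d u j) (occ_at u w t).
Proof.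
move=> hu; apply: (iffP eqP).
- move=> H; split.
    by move: (congr1 size H); rewrite size_take size_drop; case: (ltnP (size u) (size w - t)) => hh; lia.
  by move=> j hj; rewrite -H nth_take // nth_drop.
- case=> h1 h2.
  have e: size (take (size u) (drop t w)) = size u.
    by rewrite size_take size_drop; case: (ltnP (size u) (size w - t)) => hh; lia.
  apply: (@eq_from_nth _ d) => // j; rewrite e => hj.
  by rewrite nth_take // nth_drop h2.
Qed.

Lemma count_two (P : pred nat) N : 0 < N -> P 0 -> P N ->
  (forall i, 0 < i < N -> ~~ P i) -> count P (iota 0 N.+1) = 2.
Proof.
move=> hN h0 hN' hm.
have -> : N.+1 = 1 + ((N-1) + 1) by lia.
rewrite !iotaD !count_cat /= h0.
have -> : 0 + 1 + (N - 1) = N by lia.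
rewrite hN' (@eq_in_count _ _ pred0) ?count_pred0 //.
move=> i; rewrite mem_iota => hi; apply/negbTE; apply: hm; lia.
Qed.

Lemma prefix_nseq (a : T) i j : i <= j -> prefix (nseq i a) (nseq j a).
Proof. by move=> h; rewrite -(subnKC h) nseqD prefix_prefix. Qed.
Lemma suffix_nseq (a : T) i j : i <= j -> suffix (nseq i a) (nseq j a).
Proof. by move=> h; rewrite -(subnK h) nseqD suffix_suffix. Qed.

Lemma priv_of_border u w : 2 <= size w -> is_border u w -> privileged u ->
  occurrences u w == 2 -> size u < size w -> privileged w.
Proof.
rewrite /privileged => hw hb hu ho hs.
case E: (size w) hw hs => [|n] // hw hs /=.
rewrite ifN; last by lia.
apply/hasP; exists (size u); first by rewrite mem_iota; move/and3P: hb => [? _ _]; lia.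
move/and3P: (hb) => [h1 /prefixP [s2 e] h3].
rewrite e take_size_cat // -e hb ho andbT /=.
apply: (privb_mono _ hu); lia.
Qed.

Lemma priv_nseq (a : T) k : privileged (nseq k a).
Proof.
case: k => [|k]; first by [].
elim: k => [|k IH]; first by [].
apply: (@priv_of_border (nseq k.+1 a)); rewrite ?size_nseq //.
- by rewrite /is_border size_nseq prefix_nseq ?suffix_nseq.
- rewrite /occurrences !size_nseq.
  have -> : k.+2 - k.+1 = 1 by lia.
  rewrite (_ : iota 0 2 = [:: 0; 1]) // /count drop0 take_nseq // drop_nseq take_nseq // eqxx /=.
  by [].
Qed.


Variable a : T.

Definition Uw k y := nseq k a ++ y ++ nseq k a.

Lemma size_Uw k y : size (Uw k y) = 2 * k + size y.
Proof. rewrite /Uw !size_cat size_nseq; lia. Qed.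

Lemma uN k y j : nth a (Uw k y) j =
  if (k <= j) && (j < k + size y) then nth a y (j - k) else a.
Proof.
rewrite /Uw nth_cat size_nseq; case: (ltnP j k) => h1.
  by rewrite nth_nseq h1.
rewrite /= nth_cat; case: (ltnP (j - k) (size y)) => h2.
  by rewrite ifT //; lia.
have -> : (j < k + size y) = false by lia.
by rewrite nth_nseq; case: (_ < _).
Qed.

Lemma wN u x i : nth a (u ++ x ++ u) i =
  if i < size u then nth a u i else if i < size u + size x
  then nth a x (i - size u) else nth a u (i - size u - size x).
Proof.
rewrite nth_cat; case: (ltnP i (size u)) => // h1; rewrite nth_cat.
case: (ltnP (i - size u) (size x)) => h2; first by rewrite ifT //; lia.
by rewrite ifF //; lia.
Qed.

Definition avoid u w := all (fun t => ~~ occ_at u w t) (iota 0 (size w)).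

Lemma avoidP u w t : 0 < size u -> avoid u w -> t + size u <= size w ->
  ~ (forall j, j < size u -> nth a w (t+j) = nth a u j).
Proof.
move=> hu /allP H ht Hj.
have := H t; rewrite mem_iota => /(_ ltac:(lia)) /negP; apply.
by apply/(occ_atP a w t hu).
Qed.

Lemma L1 k y t : 0 < size y -> nth a y 0 != a -> nth a y (size y - 1) != a ->
  avoid (nseq k a) y -> 0 < k ->
  t + k <= 2 * k + size y -> (forall j, j < k -> nth a (Uw k y) (t + j) = a) ->
  t = 0 \/ t = k + size y.
Proof.
move=> hs h0 hl hav hk ht H.
case: (ltnP t k) => h1.
  case: (posnP t) => [->|tpos]; [by left|]; exfalso.
  have := H (k - t) ltac:(lia); rewrite uN ifT; last by lia.
  rewrite (_ : t + (k - t) - k = 0); last by lia.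
  by move=> E; rewrite E eqxx in h0.
case: (leqP t (size y)) => h2.
  exfalso; apply: (avoidP (t := t - k) _ hav); rewrite ?size_nseq //; first by lia.
  move=> j hj; have := H j hj; rewrite uN ifT; last by lia.
  by rewrite nth_nseq hj (_ : t + j - k = t - k + j) //; lia.
case: (ltnP t (k + size y)) => h3; last by right; lia.
exfalso; have := H (k + size y - 1 - t) ltac:(lia); rewrite uN ifT; last by lia.
rewrite (_ : t + (k + size y - 1 - t) - k = size y - 1); last by lia.
by move=> E; rewrite E eqxx in hl.
Qed.

Section Main.
Variables (k : nat) (y x : seq T).
Hypotheses (hk : 0 < k) (hy : 2 <= size y) (hx : 2 <= size x).
Hypotheses (y0 : nth a y 0 != a) (y1 : nth a y 1 != a)
  (y2 : nth a y (size y - 2) != a) (y3 : nth a y (size y - 1) != a)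
  (yav : avoid (nseq k a) y).
Hypotheses (x0 : nth a x 0 != a) (x1 : nth a x 1 = a)
  (x2 : nth a x (size x - 2) = a) (x3 : nth a x (size x - 1) != a)
  (xav : avoid (Uw k y) x).

Lemma occ_U : occurrences (nseq k a) (Uw k y) == 2.
Proof.
rewrite /occurrences size_Uw size_nseq.
have -> : 2 * k + size y - k = k + size y by lia.
apply/eqP/count_two; first by lia.
- by rewrite drop0 /Uw take_size_cat ?size_nseq.
- rewrite /Uw catA drop_size_cat ?size_cat ?size_nseq //.
  by rewrite take_nseq.
- have hk2 : 0 < size (nseq k a) by rewrite size_nseq.
  move=> p hp; apply/negP => hocc.
  have : occ_at (nseq k a) (Uw k y) p by rewrite /occ_at size_nseq.
  case/(occ_atP a (Uw k y) p hk2) => h1 H.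
  rewrite size_nseq size_Uw in h1 H.
  have := L1 (t := p) _ y0 y3 yav hk h1.
  case; [lia| |lia|lia]; move=> j hj; rewrite H // nth_nseq hj //.
Qed.

Lemma priv_U : privileged (Uw k y).
Proof.
apply: (@priv_of_border (nseq k a)); rewrite ?size_Uw ?size_nseq; try lia.
- rewrite /is_border size_nseq hk /Uw prefix_prefix /=.
  by rewrite catA suffix_suffix.
- exact: priv_nseq.
- exact: occ_U.
Qed.

End Main.

Ltac cleanup := repeat match goal with
 | H : is_true (_ != _) |- _ => clear H
 | H : forall _, _ |- _ => clear H
 | H : is_true (avoid _ _) |- _ => clear H
 | H : is_true (occ_at _ _ _) |- _ => clear H
 | H : ?u = ?v |- _ => lazymatch type of u with nat => fail | _ => clear H end
 end.
Ltac slia := cleanup; lia.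


Lemma occ_w k y x : 0 < k -> 2 <= size y -> 2 <= size x ->
  nth a y 0 != a -> nth a y 1 != a -> nth a y (size y - 2) != a ->
  nth a y (size y - 1) != a -> avoid (nseq k a) y ->
  nth a x 0 != a -> nth a x 1 = a -> nth a x (size x - 2) = a ->
  nth a x (size x - 1) != a -> avoid (Uw k y) x ->
  occurrences (Uw k y) (Uw k y ++ x ++ Uw k y) == 2.
Proof.
move=> hk hy hx y0 y1 y2 y3 yav x0 x1 x2 x3 xav.
have su : size (Uw k y) = 2*k + size y by rewrite size_Uw.
have hu : 0 < size (Uw k y) by slia.
rewrite /occurrences (size_cat (Uw k y)) size_cat su.
have -> : 2 * k + size y + (size x + (2 * k + size y)) - (2 * k + size y) = 2 * k + size y + size x by slia.

apply/eqP/count_two; first by slia.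
- by rewrite drop0 take_size_cat.
- rewrite catA drop_size_cat; first by rewrite -su take_size.
  by rewrite (size_cat (Uw k y)) su.
move=> p hp; apply/negP => hocc.
have : occ_at (Uw k y) (Uw k y ++ x ++ Uw k y) p by rewrite /occ_at su.
case/(occ_atP a (Uw k y ++ x ++ Uw k y) p hu) => _ H.
rewrite su in H; clear hocc.
case: (ltnP p (2*k + size y)) => hA.
  case: (leqP (p + k) (2*k + size y)) => hpk.
    have HL : forall j, j < k -> nth a (Uw k y) (p + j) = a.
      move=> j hj; have := H j ltac:(slia); rewrite wN su ifT; last by slia.
      by move=> ->; rewrite uN ifF //; slia.
    have := L1 (t := p) (ltnW hy) y0 y3 yav hk hpk HL.
    case; first by slia.
    move=> hpks.
    have := H (k+1) ltac:(slia); rewrite wN su ifF; last by slia.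
    rewrite ifT; last by slia.
    rewrite (_ : p + (k + 1) - (2 * k + size y) = 1); last by slia.
    rewrite x1 uN ifT; last by slia.
    rewrite (_ : k + 1 - k = 1); last by slia.
    by move=> E; move: y1; rewrite -E eqxx.
  have := H (2*k + size y - p) ltac:(slia); rewrite wN su ifF; last by slia.
  rewrite ifT; last by slia.
  rewrite (_ : p + (2 * k + size y - p) - (2 * k + size y) = 0); last by slia.
  rewrite uN ifF; last by slia.
  by move=> E; move: x0; rewrite E eqxx.
case: (leqP p (size x)) => hB.
  apply: (avoidP (t := p - size (Uw k y)) hu xav); first by slia.
  move=> j hj; have := H j ltac:(slia); rewrite wN su ifF; last by slia.
  rewrite ifT; last by slia.
  by rewrite (_ : p + j - (2 * k + size y) = p - (2 * k + size y) + j); last by slia.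
case: (leqP (2*k + size y + size x) (p + k + size y)) => hC.
  have HL : forall j, j < k -> nth a (Uw k y)
      (p + k + size y - (2*k + size y + size x) + j) = a.
    move=> j hj; have := H (k + size y + j) ltac:(slia); rewrite wN su ifF; last by slia.
    rewrite ifF; last by slia.
    rewrite [nth a (Uw k y) (k + size y + j)]uN ifF; last by slia.
    by rewrite (_ : p + (k + size y + j) - (2 * k + size y) - size x =
       p + k + size y - (2 * k + size y + size x) + j); last by slia.
  have := L1 (t := p + k + size y - (2*k + size y + size x)) (ltnW hy) y0 y3 yav hk
    ltac:(slia) HL.
  case; last by slia.
  move=> ht0.
  have := H (k + size y - 2) ltac:(slia); rewrite wN su ifF; last by slia.
  rewrite ifT; last by slia.
  rewrite (_ : p + (k + size y - 2) - (2 * k + size y) = size x - 2); last by slia.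
  rewrite x2 uN ifT; last by slia.
  rewrite (_ : k + size y - 2 - k = size y - 2); last by slia.
  by move=> E; move: y2; rewrite -E eqxx.
have := H (k + size y + (2*k + size y + size x - 1 - (p + k + size y))) ltac:(slia).
rewrite wN su ifF; last by slia.
rewrite ifT; last by slia.
rewrite (_ : p + (k + size y + (2 * k + size y + size x - 1 - (p + k + size y)))
   - (2 * k + size y) = size x - 1); last by slia.
rewrite uN ifF; last by slia.
by move=> E; move: x3; rewrite E eqxx.
Qed.

Lemma priv_w k y x : 0 < k -> 2 <= size y -> 2 <= size x ->
  nth a y 0 != a -> nth a y 1 != a -> nth a y (size y - 2) != a ->
  nth a y (size y - 1) != a -> avoid (nseq k a) y ->
  nth a x 0 != a -> nth a x 1 = a -> nth a x (size x - 2) = a ->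
  nth a x (size x - 1) != a -> avoid (Uw k y) x -> privileged (Uw k y ++ x ++ Uw k y).
Proof.
move=> hk hy hx y0 y1 y2 y3 yav x0 x1 x2 x3 xav.
apply: (@priv_of_border (Uw k y)); rewrite ?size_cat ?size_Uw; try slia.
- rewrite /is_border size_Uw prefix_prefix catA suffix_suffix !andbT.
  by apply/ltP; lia.
- exact: (priv_U hk hy hx y0 y1 y2 y3 yav x0 x3 xav).
- exact: occ_w.
Qed.

End W.

Section C.
Variable T : finType.
Variable a : T.
Local Notation q := #|T|.

Lemma card_occ (p : seq T) L t : 0 < size p ->
  #|[set w : L.-tuple T | occ_at p w t]| <= q ^ (L - size p).
Proof.
move=> hp.
case: (leqP (t + size p) L) => htL; last first.
  rewrite (_ : [set w : L.-tuple T | occ_at p w t] = set0) ?cards0 //.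
  apply/setP => w; rewrite !inE; apply/negP => /(occ_atP a w t hp) [h _].
  by move: h; rewrite size_tuple => h; have := leq_ltn_trans h htL; rewrite ltnn.
pose z (w : L.-tuple T) := take t w ++ drop (t + size p) w.
pose f (w : L.-tuple T) := [ffun j : 'I_(L - size p) => nth a (z w) j].
rewrite -(card_in_imset (f := f)); last first.
  move=> w1 w2; rewrite !inE => /eqP h1 /eqP h2 /ffunP E.
  have sz : forall w : L.-tuple T, size (z w) = L - size p.
    by move=> w; rewrite size_cat size_take size_drop size_tuple; case: ifP; lia.
  have ez : z w1 = z w2.
    apply: (@eq_from_nth _ a); first by rewrite !sz.
    move=> j; rewrite sz => hj; have := E (Ordinal hj); by rewrite !ffunE.
  have st : forall w : L.-tuple T, size (take t w) = t.
    by move=> w; rewrite size_takel // size_tuple; lia.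
  have e1 : take t w1 = take t w2.
    by move: (congr1 (take t) ez); rewrite /z !take_size_cat ?st.
  have e2 : drop (t + size p) w1 = drop (t + size p) w2.
    by move: (congr1 (drop t) ez); rewrite /z !drop_size_cat ?st.
  apply: val_inj => /=.
  rewrite -(cat_take_drop t w1) -(cat_take_drop t w2) e1; congr (_ ++ _).
  rewrite -(cat_take_drop (size p) (drop t w1)) -(cat_take_drop (size p) (drop t w2)).
  by rewrite h1 h2 !drop_drop addnC e2.
apply: leq_trans (max_card _) _.
by rewrite card_ffun card_ord.
Qed.

Lemma card_has (p : seq T) L (r : seq nat) : 0 < size p ->
  #|[set w : L.-tuple T | has (occ_at p w) r]| <= size r * q ^ (L - size p).
Proof.
move=> hp; elim: r => [|t r IH].
  by rewrite (_ : [set w : L.-tuple T | _] = set0) ?cards0 //; apply/setP => w; rewrite !inE.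
rewrite (_ : [set w : L.-tuple T | has (occ_at p w) (t :: r)] =
  [set w : L.-tuple T | occ_at p w t] :|: [set w : L.-tuple T | has (occ_at p w) r]); last first.
  by apply/setP => w; rewrite !inE.
apply: leq_trans (leq_card_setU _ _).1 _.
by rewrite mulSn leq_add // card_occ.
Qed.

Lemma card_bad (p : seq T) L : 0 < size p ->
  #|[set w : L.-tuple T | ~~ avoid p w]| <= L * q ^ (L - size p).
Proof.
move=> hp; have H := card_has L (iota 0 L) hp; rewrite size_iota in H.
rewrite (_ : [set w : L.-tuple T | ~~ avoid p w] =
   [set w : L.-tuple T | has (occ_at p w) (iota 0 L)]) //.
apply/setP => w; rewrite !inE /avoid size_tuple -has_predC.
by apply: eq_has => t /=; rewrite negbK.
Qed.

Definition fix4 L c0 c1 c2 c3 (w : seq T) :=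
  [&& nth a w 0 == c0, nth a w 1 == c1, nth a w (L - 2) == c2 & nth a w (L - 1) == c3].

Lemma card_fix4 L c0 c1 c2 c3 : 4 <= L ->
  q ^ (L - 4) <= #|[set w : L.-tuple T | fix4 L c0 c1 c2 c3 w]|.
Proof.
move=> hL.
have E : ((L - 4) + 2).+2 = L by lia.
pose g (z : (L - 4).-tuple T) : L.-tuple T :=
  tcast E [tuple of c0 :: c1 :: (z ++ [:: c2; c3])].
have gi : injective g.
  move=> z1 z2 Ez; have := congr1 (fun t : L.-tuple T => tval t) Ez; rewrite /g /= !val_tcast /= => [[]] /eqP.
  by rewrite eqseq_cat ?size_tuple // => /andP [/eqP /val_inj].
rewrite -card_tuple -cardsT -(card_imset _ gi).
apply: subset_leq_card; apply/subsetP => w /imsetP [z _ ->].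
rewrite inE /fix4 /g !val_tcast /= !eqxx /=.
have e2 : L - 2 = (L - 4).+2 by lia.
have e1 : L - 1 = (L - 4).+3 by lia.
rewrite e2 e1 /=.
by rewrite !nth_cat size_tuple ltnn subnn ltnNge leqnSn /= subSnn /= !eqxx.
Qed.

Lemma card_good (p : seq T) L c0 c1 c2 c3 : 0 < size p -> 4 <= L ->
  q ^ (L - 4) <= #|[set w : L.-tuple T | fix4 L c0 c1 c2 c3 w && avoid p w]|
     + L * q ^ (L - size p).
Proof.
move=> hp hL; apply: leq_trans (card_fix4 c0 c1 c2 c3 hL) _.
apply: leq_trans (leq_add (leqnn _) (card_bad L hp)).
apply: leq_trans (leq_card_setU _ _).1; apply: subset_leq_card.
apply/subsetP => w; rewrite !inE => ->; by case: (avoid p w).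
Qed.

End C.

Lemma half_bound (q L K X : nat) : 4 <= L -> K <= L -> 2 * q ^ 4 * L <= q ^ K ->
  q ^ (L - 4) <= X + L * q ^ (L - K) -> q ^ L <= 2 * q ^ 4 * X.
Proof.
move=> h4 hK hb hX.
have e1 : q ^ L = q ^ 4 * q ^ (L - 4) by rewrite -expnD subnKC.
have e2 : q ^ L = q ^ K * q ^ (L - K) by rewrite -expnD subnKC.
have h1 : 2 * q ^ 4 * q ^ (L - 4) <= 2 * q ^ 4 * (X + L * q ^ (L - K)) by rewrite leq_mul2l hX orbT.
have h2 : 2 * q ^ 4 * L * q ^ (L - K) <= q ^ K * q ^ (L - K) by rewrite leq_mul2r hb orbT.
nia.
Qed.

Section D.
Variable T : finType.
Variables a b : T.
Hypothesis hab : a != b.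
Local Notation q := #|T|.

Variables k s m : nat.
Hypotheses (hk : 0 < k) (hs : 4 <= s) (hm : 4 <= m) (hks : k <= s)
  (hlm : 2 * k + s <= m) (hqk : 2 * q ^ 4 * s <= q ^ k)
  (hql : 2 * q ^ 4 * m <= q ^ (2 * k + s)).

Definition Ys := [set y : s.-tuple T | fix4 a s b b b b y && avoid (nseq k a) y].
Definition Xs (y : seq T) :=
  [set x : m.-tuple T | fix4 a m b a a b x && avoid (Uw a k y) x].

Lemma Ys_bound : q ^ s <= 2 * q ^ 4 * #|Ys|.
Proof.
apply: (half_bound (K := k)) => //.
by have := card_good a (p := nseq k a) b b b b ltac:(rewrite size_nseq //) hs; rewrite size_nseq.
Qed.

Lemma Xs_bound (y : s.-tuple T) : q ^ m <= 2 * q ^ 4 * #|Xs y|.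
Proof.
have su : size (Uw a k y) = 2 * k + s by rewrite size_Uw size_tuple.
apply: (half_bound (K := 2 * k + s)) => //.
have := card_good a (p := Uw a k y) b a a b ltac:(rewrite su; lia) hm; by rewrite su.
Qed.

Local Notation n := (2 * (2 * k + s) + m).

Lemma En : k + (s + k) + (m + (k + (s + k))) = n.
Proof. lia. Qed.

Definition F (yx : s.-tuple T * m.-tuple T) : n.-tuple T :=
  tcast En [tuple of (nseq k a ++ yx.1 ++ nseq k a) ++
          (yx.2 ++ (nseq k a ++ yx.1 ++ nseq k a))].

Lemma F_val yx : tval (F yx) = Uw a k yx.1 ++ yx.2 ++ Uw a k yx.1.
Proof. by rewrite /F val_tcast. Qed.

Lemma F_inj : injective F.
Proof.
move=> [y1 x1] [y2 x2] E; have := congr1 (fun t : n.-tuple T => tval t) E.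
rewrite /= !F_val /= => e.
have ey : tval y1 = tval y2.
  have := congr1 (fun w => take s (drop k w)) e; rewrite /Uw /= -!catA.
  by rewrite !drop_size_cat ?size_nseq // !take_size_cat ?size_tuple.
have ex : tval x1 = tval x2.
  have := congr1 (fun w => take m (drop (2 * k + s) w)) e; rewrite /=.
  by rewrite !drop_size_cat ?size_Uw ?size_tuple // !take_size_cat ?size_tuple.
by congr (_, _); apply: val_inj.
Qed.

Definition G := [set yx : s.-tuple T * m.-tuple T | (yx.1 \in Ys) && (yx.2 \in Xs yx.1)].

Lemma G_card : #|G| = \sum_(y in Ys) #|Xs y|.
Proof.
transitivity (\sum_(y in Ys) \sum_(x in Xs y) 1); last first.
  by apply: eq_bigr => y _; rewrite sum1_card.
transitivity (\sum_y \sum_x (if (y \in Ys) && (x \in Xs y) then 1 else 0)); last first.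
  rewrite [RHS]big_mkcond; apply: eq_bigr => y _; case: ifP => hy /=.
    by rewrite [RHS]big_mkcond; apply: eq_bigr => x _.
  by rewrite big1.
rewrite pair_big /= -sum1_card big_mkcond; apply: eq_bigr => [[y x]] _.
by rewrite inE.
Qed.

Lemma G_priv : #|G| <= num_privileged T n.
Proof.
rewrite -(card_imset _ F_inj) /num_privileged.
apply: subset_leq_card; apply/subsetP => w /imsetP [[y x]].
rewrite inE /= /Ys /Xs !inE => /andP [/andP [fy ay] /andP [fx ax]] ->.
rewrite /= F_val /=.
move: fy fx; rewrite /fix4 => /and4P [/eqP y0 /eqP y1 /eqP y2 /eqP y3].
move=> /and4P [/eqP x0 /eqP x1 /eqP x2 /eqP x3].
have nb : b != a by rewrite eq_sym.
apply: priv_w; rewrite ?size_tuple //; try lia;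
  rewrite ?y0 ?y1 ?y2 ?y3 ?x0 ?x3 //.
Qed.

Lemma main_count : q ^ s * q ^ m <= 4 * q ^ 8 * num_privileged T n.
Proof.
have h1 : \sum_(y in Ys) q ^ m <= 2 * q ^ 4 * \sum_(y in Ys) #|Xs y|.
  rewrite big_distrr /=; apply: leq_sum => y _; exact: Xs_bound.
rewrite sum_nat_const in h1.
have h2 := Ys_bound.
have h3 := G_priv; rewrite G_card in h3.
have : q ^ s * q ^ m <= 2 * q ^ 4 * #|Ys| * q ^ m by rewrite leq_mul2r h2 orbT.
have : 2 * q ^ 4 * (#|Ys| * q ^ m) <= 2 * q ^ 4 * (2 * q ^ 4 * \sum_(y in Ys) #|Xs y|).
  by rewrite leq_mul2l h1 orbT.
have : 2 * q ^ 4 * (2 * q ^ 4 * \sum_(y in Ys) #|Xs y|) <=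
       2 * q ^ 4 * (2 * q ^ 4 * num_privileged T n).
  by rewrite !leq_mul2l h3 !orbT.
rewrite (_ : q ^ 8 = q ^ 4 * q ^ 4); last by rewrite -expnD.
nia.
Qed.

End D.

Lemma expo_base c : c * (4 * c + 5) < 2 ^ (4 * c + 4).
Proof.
elim: c => [|c IH] //.
rewrite (_ : 4 * c.+1 + 4 = (4 * c + 4) + 4); last by lia.
rewrite expnD (_ : 2 ^ 4 = 16) //.
move: IH; set X := 2 ^ (4 * c + 4) => IH; nia.
Qed.

Lemma expo c j : 4 * c + 5 <= j -> c * j < 2 ^ j.-1.
Proof.
move=> h; rewrite -(subnKC h); elim: (j - (4 * c + 5)) => [|d IH].
  by rewrite addn0 (_ : (4 * c + 5).-1 = 4 * c + 4) ?expo_base //; lia.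
rewrite (_ : (4 * c + 5 + d.+1).-1 = (4 * c + 5 + d).-1.+1); last by lia.
rewrite expnS; move: IH; set X := 2 ^ _ => IH; nia.
Qed.

Lemma pow2q q e : 2 <= q -> 2 ^ e <= q ^ e.
Proof. by move=> hq; elim: e => // e IH; rewrite !expnS leq_mul. Qed.

Lemma exp_lin q c j : 2 <= q -> 4 * c + 5 <= j -> c * j < q ^ j.-1.
Proof. move=> hq h; exact: leq_trans (expo h) (pow2q _ hq). Qed.

Section Par.
Variable q : nat.
Hypothesis hq : 2 <= q.

Definition L0 := 144 * q ^ 4 + 18.
Definition ell n := up_log q (2 * q ^ 4 * n).
Definition kk n := up_log q (2 * q ^ 4 * ell n).

Lemma q4pos : 0 < q ^ 4. Proof. by rewrite expn_gt0; lia. Qed.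

Lemma up_bounds X : 1 < X ->
  let e := up_log q X in [/\ 0 < e, X <= q ^ e, q ^ e <= q * X & q ^ e.-1 < X].
Proof.
move=> hX e; have h1 : 1 < q by lia.
have e0 : 0 < e by rewrite /e up_log_gt0 h1 hX.
have := up_log_gtn h1 hX; rewrite -/e => h.
split => //; first exact: up_logP.
rewrite -(prednK e0) expnS leq_mul2l; apply/orP; right; exact: ltnW.
Qed.

Lemma params n : q ^ L0 <= n ->
  let l := ell n in let k := kk n in
  [/\ L0 < l, 0 < k, 3 * k + 4 <= l, 3 * l + 4 <= n &
      [/\ 2 * q ^ 4 * l <= q ^ k, 2 * q ^ 4 * n <= q ^ l,
      q ^ l <= q * (2 * q ^ 4 * n), q ^ k <= q * (2 * q ^ 4 * l) & q ^ l <= n * n]].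
Proof.
move=> hn l k.
have h1 : 1 < q by lia.
have q4 := q4pos.
have hL0 : 0 < q ^ L0 by rewrite expn_gt0; lia.
have hn1 : 1 < 2 * q ^ 4 * n by nia.
have [l0 lb1 lb2 lb3] := up_bounds hn1; rewrite -/(ell n) -/l in l0 lb1 lb2 lb3.
have hLl : L0 < l.
  rewrite -(ltn_exp2l _ _ h1); apply: leq_ltn_trans hn _; apply: leq_trans lb1; nia.
have hl1 : 1 < 2 * q ^ 4 * l by nia.
have [k0 kb1 kb2 kb3] := up_bounds hl1; rewrite -/(kk n) -/k in k0 kb1 kb2 kb3.
split => //.
- case: (leqP (3 * k + 4) l) => // hc; exfalso.
  have hk : 4 * (12 * q ^ 4) + 5 <= k by rewrite /L0 in hLl; lia.
  have := exp_lin hq hk; have := kb3.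
  move: (q ^ k.-1) => Y; move: (q ^ 4) q4 => Z Z0; nia.
- case: (leqP (3 * l + 4) n) => // hc; exfalso.
  have hl : 4 * (12 * q ^ 4) + 5 <= l by rewrite /L0 in hLl; lia.
  have := exp_lin hq hl.
  have := lb3.
  move: (q ^ l.-1) => Y; move: (q ^ 4) q4 => Z Z0; nia.
- split => //.
  apply: leq_trans lb2 _.
  have : q ^ 6 <= q ^ L0 by rewrite leq_exp2l // /L0; lia.
  rewrite (_ : q ^ 6 = q * q * q ^ 4); last by rewrite !expnS mulnA.
  move: (q ^ 4) q4 => Z Z0; nia.
Qed.

End Par.

Lemma key_nat (T : finType) (q : nat) (hq : 2 <= q) (hT : #|T| = q) (a b : T) (hab : a != b)
  n : q ^ L0 q <= n ->
  let l := ell q n in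
  [/\ 0 < l, q ^ l <= n * n &
   q ^ n <= 32 * (q ^ 8 * q ^ 3 * q ^ 4 * q ^ 4 * q ^ 4) * (l * l) * n * num_privileged T n].
Proof.
move=> hn l.
have [hLl k0 hkl hln [kb1 lb1 lb2 kb2 lsq]] := params hq hn.
rewrite -/l in hLl hkl hln kb1 lb1 lb2 kb2 lsq.
set k := kk q n in k0 hkl kb1 kb2.
split => //; first by lia.
set s := l - 2 * k; set m := n - 2 * l.
have e : n = 2 * (2 * k + s) + m by rewrite /s /m; lia.
have els : 2 * k + s = l by rewrite /s; lia.
have q4 : 0 < q ^ 4 by rewrite expn_gt0; lia.
have hmc := @main_count T a b hab k s m k0 ltac:(rewrite /s; lia)
  ltac:(rewrite /m; lia) ltac:(rewrite /s; lia) ltac:(rewrite els /m; lia)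
  ltac:(rewrite hT; apply: leq_trans kb1; rewrite leq_mul2l /s; apply/orP; right; lia)
  ltac:(rewrite hT els; apply: leq_trans lb1; rewrite leq_mul2l /m; apply/orP; right; lia).
rewrite -e hT in hmc.
have en : q ^ n = q ^ s * q ^ m * (q ^ k * q ^ k) * q ^ l.
  by rewrite -!expnD; congr (q ^ _); rewrite /s /m; lia.
rewrite en.
apply: leq_trans (leq_mul (leq_mul hmc (leq_mul kb2 kb2)) lb2) _.
rewrite (_ : q ^ 8 = q ^ 4 * q ^ 4); last by rewrite -expnD.
rewrite (_ : q ^ 3 = q * q * q); last by rewrite !expnS muln1 mulnA.
move: (q ^ 4) (num_privileged T n) => Z P.
rewrite leq_eqVlt; apply/orP; left; apply/eqP; nia.
Qed.

Lemma Dpos q : 2 <= q -> 0 < 32 * (q ^ 8 * q ^ 3 * q ^ 4 * q ^ 4 * q ^ 4).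
Proof.
move=> h; have q0 : 0 < q by lia.
have e : forall j, 0 < q ^ j by move=> j; rewrite expn_gt0 q0.
by rewrite !muln_gt0 !q0.
Qed.

Lemma q_le_qL0 q n : 2 <= q -> q ^ L0 q <= n -> q <= n.
Proof.
move=> hq hn; apply: leq_trans hn.
have : q ^ 1 <= q ^ L0 q by rewrite leq_exp2l /L0; lia.
by rewrite expn1.
Qed.

Unset Implicit Arguments. Set Strict Implicit. Set Printing Implicit Defensive.
From mathcomp Require Import all_boot.
From Stdlib Require Import Reals.
From Stdlib Require Import Lra.

Lemma INR_muln (x y : nat) : INR (muln x y) = (INR x * INR y)%R.
Proof. exact: mult_INR. Qed.

Lemma INR_expn (x y : nat) : INR (expn x y) = (INR x ^ y)%R.
Proof.
elim: y => [|y IH]; first by rewrite expn0 /=.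
by rewrite expnS INR_muln IH /=.
Qed.

Lemma INR_leq (x y : nat) : (x <= y)%N -> (INR x <= INR y)%R.
Proof. by move=> h; apply: le_INR; apply/leP. Qed.

Lemma ln_le' (x y : R) : (0 < x)%R -> (x <= y)%R -> (ln x <= ln y)%R.
Proof.
move=> hx hxy; case: (Rle_lt_or_eq_dec _ _ hxy) => h.
  by left; apply: ln_increasing.
by rewrite h; right.
Qed.

Theorem theorem1 (q : nat) (hq : (2 <= q)%N) (T : finType) (hT : #|T| = q) :
  exists c : R, (0 < c)%R /\
  exists n0 : nat, forall n : nat, (n0 <= n)%N ->
    (c * (INR q ^ n) / (INR n * (ln (INR n) / ln (INR q)) ^ 2)
       <= INR (num_privileged T n))%R.
Proof.
have /card_gt1P [a [b [_ _ hab]]] : (1 < #|T|)%N by rewrite hT.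
set D := (32 * (expn q 8 * expn q 3 * expn q 4 * expn q 4 * expn q 4))%N.
have D0 : (0 < D)%N by apply: Dpos.
have KN := key_nat hq hT hab.
rewrite -/D in KN; clearbody D.
have DR : (0 < INR D)%R by apply: (lt_INR 0); apply/ltP.
exists (/ (4 * INR D))%R; split; first by apply: Rinv_0_lt_compat; lra.
exists (expn q (L0 q)) => n hn.
have [l0 lsq hmain] := KN n hn.
set l := ell q n in l0 lsq hmain.
set P := num_privileged T n in hmain *.
have qR : (1 < INR q)%R by apply: (lt_INR 1); apply/ltP.
have hqn : (q <= n)%N by apply: q_le_qL0 hn.
have nR : (INR q <= INR n)%R by apply: INR_leq.
have lnq : (0 < ln (INR q))%R by rewrite -ln_1; apply: ln_increasing; lra.
have lnqn : (ln (INR q) <= ln (INR n))%R by apply: ln_le'; lra.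
have hlog : (INR l * ln (INR q) <= 2 * ln (INR n))%R.
  have h := INR_leq _ _ lsq; rewrite INR_expn INR_muln in h.
  have := ln_le' _ _ (pow_lt (INR q) l ltac:(lra)) h.
  rewrite ln_pow; last by lra.
  rewrite ln_mult; lra.
set LL := (ln (INR n) / ln (INR q))%R.
have LLpos : (1 <= LL)%R.
  rewrite /LL; apply: (Rmult_le_reg_r (ln (INR q))) => //.
  field_simplify; lra.
have hl : (INR l <= 2 * LL)%R.
  rewrite /LL; apply: (Rmult_le_reg_r (ln (INR q))) => //.
  field_simplify; lra.
have l0R : (0 <= INR l)%R by apply: pos_INR.
have hl2 : (INR l * INR l <= 4 * (LL * LL))%R by nra.
have PR : (0 <= INR P)%R by apply: pos_INR.
have n0R : (0 < INR n)%R by lra.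
rewrite -/D in hmain.
have hM := INR_leq _ _ hmain; rewrite !INR_muln INR_expn in hM.
have M0 : (0 < INR n * LL ^ 2)%R by nra.
apply: (Rmult_le_reg_r (INR n * LL ^ 2)) => //.
rewrite /Rdiv Rmult_assoc Rinv_l; last by lra.
rewrite Rmult_1_r.
apply: Rle_trans (_ : / (4 * INR D) * (INR D * (INR l * INR l) * INR n * INR P) <= _)%R.
  apply: Rmult_le_compat_l; first by left; apply: Rinv_0_lt_compat; lra.
  exact: hM.
have -> : (/ (4 * INR D) * (INR D * (INR l * INR l) * INR n * INR P) =
   (INR l * INR l) * INR n * INR P / 4)%R by field; lra.
have : (0 <= INR n * INR P)%R by nra.
nra.
Qed.
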